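(* Let $G=(V,E)$ be a finite undirected graph and let $\rho\in(0,1]$. Then the procedure $\textsc{CliqueAgg}(G,\rho)$ (described in the context) outputs an inclusion-maximal $\rho$-dense aggregator of $G$.
   Context: For a graph with $n'\ge 2$ vertices and $m'$ edges its density is $m'/\binom{n'}{2}$; a graph with one vertex has density $1$. For $v\in V$, $N_G(v)$ is the neighborhood of $v$. A degeneracy ordering of a graph is obtained by repeatedly removing a minimum-degree vertex of the remaining graph (ties broken by vertex id); the order of removal is the ordering. A $\rho$-dense aggregator of $G$ is a collection of nonempty vertex sets $S_1,\dots,S_k\subseteq V$ such that (1) every clique $K$ of $G$ satisfies $K\subseteq S_i$ for some $i$, and (2) every induced subgraph $G[S_i]$ has density at least $\rho$. It is inclusion-maximal if there are no distinct $S_i,S_j$ in it with $S_i\subseteq S_j$. The procedure $\textsc{CliqueAgg}(G,\rho)$ returns $\textsc{Rec}(H=V, C=\emptyset, X=\emptyset)$, where $\textsc{Rec}(H,C,X)$ (with $H,C,X\subseteq V$) does the following. (1) If some $x\in X$ satisfies $H\subseteq N_G(x)$, return $\emptyset$. (2) If $G[C\cup H]$ has density at least $\rho$, return $\{C\cup H\}$. (3) Otherwise set $S:=\emptyset$, $\hat H:=H$, $\hat X:=X$, compute a degeneracy ordering of $G[H]$, and for each $v\in H$ in this order: set $H_v:=N_G(v)\cap\hat H$, $C_v:=C\cup\{v\}$, $X_v:=\hat X\cap N_G(v)$; set $S:=S\cup\textsc{Rec}(H_v,C_v,X_v)$; set $\hat H:=\hat H\setminus\{v\}$ and $\hat X:=\hat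 X\cup\{v\}$; if some $x\in\hat X$ satisfies $\hat H\subseteq N_G(x)$, return $S$; if $G[C\cup\hat H]$ has density at least $\rho$, return $S\cup\{C\cup\hat H\}$. (4) After the loop, return $S$. *)

(* Defs.v *)
(* A finite simple graph is a symmetric irreflexive relation
   e : rel T on a finType T; V = [set: T]. Vertex ids = enum_rank. *)
From mathcomp Require Import all_boot all_order all_algebra.
Set Implicit Arguments. Unset Strict Implicit. Unset Printing Implicit Defensive.
Import Order.TTheory GRing.Theory Num.Theory.

Section CliqueAgg.
Variables (T : finType) (e : rel T).

Definition nbhd (v : T) : {set T} := [set u | e v u].

Definition n_edges (S : {set T}) : nat :=
  #|[set A : {set T} | (A \subset S) && (#|A| == 2) &&
       [forall x in A, forall y in A, (x != y) ==> e x y]]|.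

(* density: m'/binom(n',2) for n' >= 2; 1 otherwise (one vertex; the empty
   set never arises for a nonempty graph) *)
Definition density (R : realFieldType) (S : {set T}) : R :=
  if 1 < #|S| then ((n_edges S)%:R / ('C(#|S|, 2))%:R)%R else 1%R.

Definition is_clique (K : {set T}) : Prop :=
  forall x y, x \in K -> y \in K -> x != y -> e x y.

Definition deg_in (W : {set T}) (v : T) : nat := #|W :&: nbhd v|.

Definition min_deg_vertex (W : {set T}) : option T :=
  [pick v in W | [forall u in W, (deg_in W v < deg_in W u) ||
        ((deg_in W v == deg_in W u) && (enum_rank v <= enum_rank u)%N)]].

Fixpoint degen_aux (n : nat) (W : {set T}) : seq T :=
  match n with
  | 0 => [::]
  | n'.+1 => match min_deg_vertex W with
             | Some v => v :: degen_aux n' (W :\ v)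
             | None => [::]
             end
  end.

Definition degeneracy_ordering (W : {set T}) : seq T := degen_aux #|W| W.

Variables (R : realFieldType) (rho : R).

Definition dense (S : {set T}) : bool := (rho <= density R S)%R.

Definition covered (H X : {set T}) : bool := [exists x in X, H \subset nbhd x].

(* Rec(H, C, X), with a fuel argument; fuel > #|H| is maintained along
   the recursion since |H_v| < |H|, so the fuel-0 case is never reached
   when started with fuel #|T|.+1. *)
Fixpoint Rec (fuel : nat) (H C X : {set T}) : {set {set T}} :=
  match fuel with
  | 0 => set0
  | fuel'.+1 =>
    if covered H X then set0
    else if dense (C :|: H) then [set C :|: H]
    else
      let fix loop (s : seq T) (S : {set {set T}}) (Hh Xh : {set T})
          : {set {set T}} :=
        match s with
        | [::] => S
        | v :: s' =>
          let S' := S :|: Rec fuel' (nbhd v :&: Hh) (v |: C) (Xh :&: nbhd v) in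
          let Hh' := Hh :\ v in
          let Xh' := v |: Xh in
          if covered Hh' Xh' then S'
          else if dense (C :|: Hh') then S' :|: [set C :|: Hh']
          else loop s' S' Hh' Xh'
        end
      in loop (degeneracy_ordering H) set0 H X
  end.

Definition CliqueAgg : {set {set T}} := Rec #|T|.+1 [set: T] set0 set0.

Definition dense_aggregator (A : {set {set T}}) : Prop :=
  [/\ (forall S, S \in A -> S != set0),
      (forall K, is_clique K -> exists2 S, S \in A & K \subset S)
    & (forall S, S \in A -> (rho <= density R S)%R)].

Definition inclusion_maximal (A : {set {set T}}) : Prop :=
  forall S1 S2, S1 \in A -> S2 \in A -> S1 != S2 -> ~~ (S1 \subset S2).

End CliqueAgg.

(* Main.v *)
Require Import Defs.
From mathcomp Require Import all_boot all_order all_algebra.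
From mathcomp Require Import zify.
Import Order.TTheory GRing.Theory Num.Theory.
Set Implicit Arguments. Unset Strict Implicit. Unset Printing Implicit Defensive.

Section Proofs.
Variables (T : finType) (e : rel T) (R : realFieldType) (rho : R).
Hypotheses (esym : symmetric e) (eirr : irreflexive e).

Definition loopF (f : {set T} -> {set T} -> {set T} -> {set {set T}}) (C : {set T}) :=
  fix loop (s : seq T) (S : {set {set T}}) (Hh Xh : {set T}) : {set {set T}} :=
        match s with
        | [::] => S
        | v :: s' =>
          let S' := S :|: f (nbhd e v :&: Hh) (v |: C) (Xh :&: nbhd e v) in
          let Hh' := Hh :\ v in
          let Xh' := v |: Xh in
          if covered e Hh' Xh' then S'
          else if dense e rho (C :|: Hh') then S' :|: [set C :|: Hh']
          else loop s' S' Hh' Xh'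
        end.

Lemma RecS fuel H C X : Rec e rho fuel.+1 H C X =
  if covered e H X then set0 else if dense e rho (C :|: H) then [set C :|: H]
  else loopF (Rec e rho fuel) C (degeneracy_ordering e H) set0 H X.
Proof. by []. Qed.

Lemma min_deg_some (W : {set T}) : W != set0 -> exists2 v, min_deg_vertex e W = Some v & v \in W.
Proof.
case/set0Pn => w wW.
rewrite /min_deg_vertex; case: pickP => [v /andP [vW _] | none]; first by exists v.
exfalso.
pose F v := deg_in e W v * #|T| + enum_rank v.
case: (@arg_minnP _ w (fun x => x \in W) F wW) => v vW vmin.
move: (none v) => /=; rewrite vW /=; move/negP; apply.
apply/forallP => u; apply/implyP => uW.
have := vmin u uW; rewrite /F.
have := ltn_ord (enum_rank v); have := ltn_ord (enum_rank u).
set a := deg_in e W v; set b := deg_in e W u.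
move: (enum_rank v) (enum_rank u) => [p /= _] [q /= _] hq hp h.
have [ab|ab|ab] := ltngtP a b; [done| |by rewrite /=; lia].
exfalso. have : (b.+1 * #|T| <= a * #|T|)%N by rewrite leq_mul2r ab orbT.
rewrite mulSn. have hq' : (q < #|T|)%N := hq. move: h hq'. clear. move: #|T| => N. lia.
Qed.

Lemma degen_aux_prop n (W : {set T}) : #|W| = n ->
  uniq (degen_aux e n W) /\ (forall x, (x \in degen_aux e n W) = (x \in W)).
Proof.
elim: n W => [|n IH] W hW /=.
  split=> // x; move/eqP: hW; rewrite cards_eq0 => /eqP ->; by rewrite inE.
have : W != set0 by apply/set0Pn; apply/card_gt0P; rewrite hW.
case/min_deg_some => v -> vW.
have hW' : #|W :\ v| = n by rewrite (cardsD1 v W) vW in hW; case: hW.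
case: (IH _ hW') => u1 m1; split.
  by rewrite /= u1 m1 !inE eqxx.
move=> x; rewrite inE m1 !inE; case: eqP => // ->; by rewrite vW.
Qed.

Lemma degen_prop (W : {set T}) : uniq (degeneracy_ordering e W) /\
   (forall x, (x \in degeneracy_ordering e W) = (x \in W)).
Proof. exact: degen_aux_prop. Qed.

Lemma clique_dense (K : {set T}) : (rho <= 1)%R -> is_clique e K -> dense e rho K.
Proof.
move=> r1 cK; rewrite /dense /density; case: ifP => // h.
suff -> : n_edges e K = 'C(#|K|, 2).
  rewrite mulfV //; rewrite pnatr_eq0 -lt0n bin_gt0; lia.
rewrite /n_edges -cards_draws; apply: eq_card => A; rewrite !inE.
case sAK: (A \subset K) => //=; case: (#|A| == 2) => //=.
apply/forallP => x; apply/implyP => xA; apply/forallP => y; apply/implyP => yA.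
apply/implyP => xy; apply: cK => //; exact: (subsetP sAK).
Qed.


Definition inv (C H : {set T}) := forall c h, c \in C -> h \in H -> e c h.

Lemma loop_mono f (C : {set T}) s (S : {set {set T}}) (Hh Xh : {set T}) : S \subset loopF f C s S Hh Xh.
Proof.
elim: s S Hh Xh => [|v s IH] S Hh Xh /=; first exact: subxx.
have h1 : S \subset S :|: f (nbhd e v :&: Hh) (v |: C) (Xh :&: nbhd e v) by exact: subsetUl.
case: ifP => _ //; case: ifP => _; last exact: subset_trans h1 (IH _ _ _).
exact: subset_trans h1 (subsetUl _ _).
Qed.

Lemma nbhd_irr v : v \notin nbhd e v.
Proof. by rewrite inE eirr. Qed.

Lemma card_sub_lt (H Hh : {set T}) v : v \in H -> Hh \subset H -> (#|nbhd e v :&: Hh| < #|H|)%N.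
Proof.
move=> vH sHh; apply: (@leq_ltn_trans #|H :\ v|); last by rewrite (cardsD1 v H) vH.
apply: subset_leq_card; apply/subsetP => x; rewrite !inE => /andP [xv xHh].
rewrite (subsetP sHh) // andbT; apply/eqP => exv; move: xv; rewrite exv eirr.
by [].
Qed.

Section LoopCover.
Variables (fuel : nat) (f : {set T} -> {set T} -> {set T} -> {set {set T}}).
Hypothesis IHf : forall H' C' X' K : {set T}, (#|H'| < fuel)%N -> inv C' H' -> is_clique e K ->
  C' \subset K -> K \subset C' :|: H' ->
  (exists2 S, S \in f H' C' X' & K \subset S) \/ (exists2 x, x \in X' & K :\: C' \subset nbhd e x).
Variables (H C K : {set T}).
Hypotheses (hH : (#|H| <= fuel)%N) (hinv : inv C H) (cK : is_clique e K) (CK : C \subset K)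
  (Hn : H != set0).

Lemma loop_cover s (S : {set {set T}}) (Hh Xh : {set T}) : uniq s -> {subset s <= Hh} -> Hh \subset H ->
  K \subset C :|: Hh -> {in K :\: C, forall k, k \in s} ->
  (exists2 S', S' \in loopF f C s S Hh Xh & K \subset S') \/
  (exists x, ((x \in Xh) || (x \in H)) && (K :\: C \subset nbhd e x)).
Proof.
elim: s S Hh Xh => [|v s IH] S Hh Xh /= us sHh HhH KCH Ks.
  right; case/set0Pn: Hn => h hH'; exists h; rewrite hH' orbT /=.
  by apply/subsetP => k kK; have := Ks k kK.
case/andP: us => vs us.
have vHh : v \in Hh by apply: sHh; rewrite inE eqxx.
have vH : v \in H by exact: (subsetP HhH).
set S' := S :|: f (nbhd e v :&: Hh) (v |: C) (Xh :&: nbhd e v).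
have S'sub : forall s (S0 : {set {set T}}) (Hh0 Xh0 : {set T}), S' \subset S0 -> S' \subset loopF f C s S0 Hh0 Xh0.
  by move=> ? ? ? ? h; exact: subset_trans h (loop_mono _ _ _ _ _ _).
have vC : v \notin C.
  by apply/negP => vC; have := hinv vC vH; rewrite eirr.
case vK: (v \in K).
  have := @IHf (nbhd e v :&: Hh) (v |: C) (Xh :&: nbhd e v) K
    (leq_trans (card_sub_lt vH HhH) hH) _ cK _ _.
  case.
  - move=> c h; rewrite !inE => /orP [/eqP -> | cC] /andP [hv hHh] //.
    by apply: hinv => //; exact: (subsetP HhH).
  - by apply/subsetP => x; rewrite !inE => /orP [/eqP -> // | /(subsetP CK)].
  - apply/subsetP => k kK; rewrite !inE.
    case: (eqVneq k v) => [//|kv] /=.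
    move: (subsetP KCH k kK); rewrite inE => /orP [-> // | kHh].
    by rewrite kHh andbT; apply/orP; right; apply: cK => //; rewrite eq_sym.
  - move=> [S1 S1in KS1]; left; exists S1 => //.
    have : S1 \in S' by rewrite inE S1in orbT.
    apply: (subsetP _). case: ifP => _; first exact: subxx.
    case: ifP => _; first exact: subsetUl.
    exact: loop_mono.
  - move=> [x]; rewrite inE => /andP [xXh xv] sub; right; exists x; rewrite xXh /=.
    apply/subsetP => k; rewrite inE => /andP [kC kK].
    case: (eqVneq k v) => [-> | kv]; first by rewrite inE -esym; move: xv; rewrite inE.
    by apply: (subsetP sub); rewrite !inE (negbTE kv) (negbTE kC) kK.
have KCH' : K \subset C :|: (Hh :\ v).
  apply/subsetP => k kK; move: (subsetP KCH k kK); rewrite !inE.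
  by case: (eqVneq k v) => [kv | _] //; move: vK; rewrite -kv kK.
case: ifP => [/existsP [x /andP [xX sub]] | _].
  right; exists x; apply/andP; split.
    by move: xX; rewrite !inE => /orP [/eqP -> | ->] //; rewrite vH orbT.
  apply/subsetP => k; rewrite inE => /andP [kC kK]; apply: (subsetP sub).
  by move: (subsetP KCH' k kK); rewrite inE (negbTE kC).
case: ifP => _.
  left; exists (C :|: (Hh :\ v)) => //; by rewrite !inE eqxx orbT.
have := IH S' (Hh :\ v) (v |: Xh) us _ (subset_trans (subsetDl _ _) HhH) KCH' _.
case.
- move=> x xs; rewrite !inE sHh ?inE ?xs ?orbT // andbT.
  by apply/eqP => xv; move: vs; rewrite -xv xs.
- move=> k kK; have := Ks k kK; rewrite inE => /orP [/eqP kv | //].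
  by move: kK; rewrite inE kv vK andbF.
- by left.
- move=> [x /andP [xX sub]]; right; exists x; rewrite sub andbT.
  move: xX; rewrite !inE; case/orP => [/orP [/eqP -> | ->] | ->]; by rewrite ?vH ?orbT.
Qed.

End LoopCover.


Lemma rec_cover (r1 : (rho <= 1)%R) fuel : forall H C X K : {set T}, (#|H| < fuel)%N -> inv C H ->
  is_clique e K -> C \subset K -> K \subset C :|: H ->
  (exists2 S, S \in Rec e rho fuel H C X & K \subset S) \/
  (exists2 x, x \in X & K :\: C \subset nbhd e x).
Proof.
elim: fuel => [//|fuel IHf] H C X K0 hH hinv.
suff main : forall n K, (#|~: K| < n)%N -> is_clique e K -> C \subset K -> K \subset C :|: H ->
  (exists2 S, S \in Rec e rho fuel.+1 H C X & K \subset S) \/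
  (exists2 x, x \in X & K :\: C \subset nbhd e x).
  by apply: main; exact: ltnSn.
elim=> [//|n IHn] K hn cK CK KCH.
case: (boolP [exists y in H, (y \notin K) && [forall k in K, e k y]]).
  case/existsP => y /andP [yH /andP [yK /forallP ally]].
  have cK' : is_clique e (y |: K).
    move=> a b; rewrite !inE => /orP [/eqP -> | aK] /orP [/eqP -> | bK] ab.
    - by move: ab; rewrite eqxx.
    - by rewrite esym; move: (ally b); rewrite bK.
    - by move: (ally a); rewrite aK.
    - exact: cK.
  have := IHn (y |: K) _ cK' (subset_trans CK (subsetUr _ _)) _.
  case.
  - suff : (#|~: (y |: K)| < #|~: K|)%N by move: hn; clear; lia.
    rewrite setCU (cardsD1 y (~: K)) inE yK /=.
    rewrite ltnS; apply: subset_leq_card; apply/subsetP => z; rewrite !inE.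
    by case/andP => -> ->.
  - apply/subsetP => z; rewrite !inE => /orP [/eqP -> | zK]; first by rewrite yH orbT.
    by move: (subsetP KCH z zK); rewrite inE.
  - move=> [S Sin sub]; left; exists S => //; exact: subset_trans (subsetUr _ _) sub.
  - move=> [x xX sub]; right; exists x => //; apply: subset_trans sub.
    by apply: setSD; exact: subsetUr.
move=> nomax.
rewrite RecS; case: ifP => [/existsP [x /andP [xX sub]] | _].
  right; exists x => //; apply/subsetP => k; rewrite inE => /andP [kC kK].
  apply: (subsetP sub); move: (subsetP KCH k kK); by rewrite inE (negbTE kC).
case: ifP => [_ | nd].
  by left; exists (C :|: H); rewrite ?inE.
case: (eqVneq H set0) => [H0 | Hn].
  exfalso; move: nd; suff -> : C :|: H = K by rewrite clique_dense.
  apply/eqP; rewrite eqEsubset KCH andbT; by rewrite H0 setU0.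
have [udeg mdeg] := degen_prop H.
have := @loop_cover fuel (Rec e rho fuel) _ H C K hH hinv cK CK Hn
  (degeneracy_ordering e H) set0 H X udeg _ (subxx _) KCH _.
case.
- move=> H' C' X' K'; exact: IHf.
- by move=> x; rewrite mdeg.
- move=> k; rewrite inE mdeg => /andP [kC kK].
  by move: (subsetP KCH k kK); rewrite inE (negbTE kC).
- by left.
- move=> [x /andP [/orP [xX | xH] sub]]; first by right; exists x.
  exfalso; move/negP: nomax; apply; apply/existsP; exists x; rewrite xH /=.
  have xC : x \notin C by apply/negP => xC; have := hinv _ _ xC xH; rewrite eirr.
  have xK : x \notin K.
    apply/negP => xK; have : x \in K :\: C by rewrite inE xC xK.
    by move/(subsetP sub); rewrite inE eirr.
  rewrite xK /=; apply/forallP => k; apply/implyP => kK.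
  case: (boolP (k \in C)) => kC; first exact: hinv.
  have : k \in K :\: C by rewrite inE kC kK.
  by move/(subsetP sub); rewrite inE esym.
Qed.


Definition good (C H X Tt : {set T}) := [/\ C \subset Tt, Tt \subset C :|: H, dense e rho Tt,
  Tt != set0 & forall x, x \in X -> ~~ (Tt :\: C \subset nbhd e x)].

Definition antichain (A : {set {set T}}) :=
  forall S1 S2, S1 \in A -> S2 \in A -> S1 != S2 -> ~~ (S1 \subset S2).

Definition wit (Xh Hh C Tt : {set T}) := exists w,
  [/\ w \in Xh, w \in Tt, w \notin C, w \notin Hh & Tt \subset w |: (C :|: nbhd e w)].

Definition disj (C H : {set T}) := forall x, x \in C -> x \notin H.

Lemma antichainU (A B : {set {set T}}) : antichain A -> antichain B ->
  (forall a b, a \in A -> b \in B -> ~~ (a \subset b) /\ ~~ (b \subset a)) ->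
  antichain (A :|: B).
Proof.
move=> aA aB cr S1 S2; rewrite !inE => /orP [h1|h1] /orP [h2|h2] ne.
- exact: aA.
- by case: (cr _ _ h1 h2).
- by case: (cr _ _ h2 h1).
- exact: aB.
Qed.

Section LoopMax.
Variables (f : {set T} -> {set T} -> {set T} -> {set {set T}}).
Hypothesis IHf : forall H' C' X' : {set T}, disj C' H' -> C' :|: H' != set0 ->
  (forall Tt, Tt \in f H' C' X' -> good C' H' X' Tt) /\ antichain (f H' C' X').
Variables (H C X : {set T}).
Hypothesis (hdisj : disj C H).

Lemma loop_max s (S : {set {set T}}) (Hh Xh : {set T}) : uniq s -> {subset s <= Hh} ->
  Hh \subset H -> X \subset Xh ->
  (forall Tt, Tt \in S -> good C H X Tt) -> antichain S ->
  (forall Tt, Tt \in S -> wit Xh Hh C Tt) ->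
  (forall Tt, Tt \in loopF f C s S Hh Xh -> good C H X Tt) /\ antichain (loopF f C s S Hh Xh).
Proof.
elim: s S Hh Xh => [|v s IH] S Hh Xh /= us sHh HhH XXh gS aS wS; first by [].
case/andP: us => vs us.
have vHh : v \in Hh by apply: sHh; rewrite inE eqxx.
have vH : v \in H by exact: (subsetP HhH).
have vC : v \notin C by apply/negP => vC; move: (hdisj vC); rewrite vH.
set F := f (nbhd e v :&: Hh) (v |: C) (Xh :&: nbhd e v).
have [gF aF] : (forall Tt, Tt \in F -> good (v |: C) (nbhd e v :&: Hh) (Xh :&: nbhd e v) Tt)
    /\ antichain F.
  apply: IHf; last by apply/set0Pn; exists v; rewrite !inE eqxx.
  move=> x; rewrite !inE => /orP [/eqP -> | xC]; first by rewrite eirr.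
  apply/negP => /andP [_ xHh]; move: (hdisj xC); by rewrite (subsetP HhH).
set S' := S :|: F.
have gS' : forall Tt, Tt \in S' -> good C H X Tt.
  move=> Tt; rewrite inE => /orP [/gS // | TF].
  case: (gF _ TF) => sub1 sub2 dT nT nX; split => //.
  - exact: subset_trans (subsetUr _ _) sub1.
  - apply/subsetP => x /(subsetP sub2); rewrite !inE.
    case/orP => [/orP [/eqP -> | ->] // | /andP [_ xHh]]; first by rewrite vH orbT.
    by rewrite (subsetP HhH) ?orbT.
  - move=> x xX; apply/negP => sub.
    have vT : v \in Tt :\: C by rewrite inE vC (subsetP sub1) // !inE eqxx.
    have xv : x \in Xh :&: nbhd e v.
      by rewrite !inE (subsetP XXh) //= esym; move: (subsetP sub v vT); rewrite inE.
    move/negP: (nX x xv); apply; apply: subset_trans sub.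
    by apply: setDS; exact: subsetUr.
have wS' : forall Tt, Tt \in S' -> wit (v |: Xh) (Hh :\ v) C Tt.
  move=> Tt; rewrite inE => /orP [/wS [w [w1 w2 w3 w4 w5]] | TF].
    exists w; split => //; first by rewrite !inE w1 orbT.
    by rewrite !inE negb_and w4 orbT.
  case: (gF _ TF) => sub1 sub2 dT nT nX.
  exists v; split => //; first by rewrite !inE eqxx.
  - by rewrite (subsetP sub1) // !inE eqxx.
  - by rewrite !inE eqxx.
  - apply/subsetP => x /(subsetP sub2); rewrite !inE.
    by case/orP => [/orP [-> | ->] | /andP [-> _]]; rewrite ?orbT.
have aS' : antichain S'.
  apply: antichainU => // a b aS0 bF.
  case: (wS _ aS0) => w [w1 w2 w3 w4 w5].
  case: (gF _ bF) => sub1 sub2 dT nT nX.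
  have wv : w != v by apply/eqP => wv; move: w4; rewrite wv vHh.
  split; apply/negP => sub.
    move: (subsetP sub2 w (subsetP sub w w2)); rewrite !inE (negbTE wv) (negbTE w3) /=.
    by rewrite (negbTE w4) andbF.
  have vb : v \in b by rewrite (subsetP sub1) // !inE eqxx.
  have vw : v \in nbhd e w.
    move: (subsetP w5 v (subsetP sub v vb)); rewrite !inE eq_sym (negbTE wv) (negbTE vC) /=.
    by [].
  have wX : w \in Xh :&: nbhd e v by rewrite !inE w1 /= esym; move: vw; rewrite inE.
  move/negP: (nX w wX); apply; apply/subsetP => x; rewrite !inE negb_or.
  case/andP => /andP [xv xC] xb.
  move: (subsetP sub2 x xb); rewrite !inE (negbTE xv) (negbTE xC) /= => /andP [_ xHh].
  move: (subsetP w5 x (subsetP sub x xb)); rewrite !inE (negbTE xC) /=.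
  case/orP => [/eqP xw | //]; by move: w4; rewrite -xw xHh.
have disjh : forall x, x \in Hh :\ v -> x \notin C.
  move=> x; rewrite !inE => /andP [_ xHh]; apply/negP => xC.
  by move: (hdisj xC); rewrite (subsetP HhH).
case: ifP => [_ | ncov]; first by [].
have ncov' : forall x, x \in v |: Xh -> ~~ (Hh :\ v \subset nbhd e x).
  move=> x xX; apply/negP => sub.
  have : covered e (Hh :\ v) (v |: Xh) by apply/existsP; exists x; rewrite xX sub.
  by rewrite ncov.
case: ifP => [dn | _]; last first.
  apply: IH => //.
  - move=> x xs; rewrite !inE sHh ?inE ?xs ?orbT // andbT.
    by apply/eqP => xv; move: vs; rewrite -xv xs.
  - exact: subset_trans (subsetDl _ _) HhH.
  - exact: subset_trans XXh (subsetUr _ _).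
split.
  move=> Tt; rewrite inE => /orP [/gS' // | /set1P ->]; split => //.
  - exact: subsetUl.
  - by apply: setUS; exact: subset_trans (subsetDl _ _) HhH.
  - apply/set0Pn; case: (boolP (Hh :\ v == set0)) => [/eqP H0 | /set0Pn [x xH]].
      by move: (ncov' v); rewrite !inE eqxx H0 sub0set => /(_ isT).
    by exists x; rewrite inE xH orbT.
  - move=> x xX; apply/negP => sub; move/negP: (ncov' x (subsetP (subsetUr _ _) x (subsetP XXh x xX))).
    apply; apply/subsetP => y yH; apply: (subsetP sub).
    rewrite !inE (negbTE (disjh y yH)) /=; by move: yH; rewrite !inE.
apply: antichainU => //; first by move=> ? ? /set1P -> /set1P -> /eqP.
move=> a b aS0; move/set1P => ->.
case: (wS' _ aS0) => w [w1 w2 w3 w4 w5].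
split; apply/negP => sub.
  by move: (subsetP sub w w2); rewrite inE (negbTE w3) (negbTE w4).
move/negP: (ncov' w w1); apply; apply/subsetP => y yH.
have yC := disjh y yH.
have yD : y \in C :|: Hh :\ v by rewrite inE yH orbT.
move: (subsetP w5 y (subsetP sub y yD)); rewrite !inE (negbTE yC) /=.
case/orP => [/eqP yw | //]; by move: w4; rewrite -yw yH.
Qed.

End LoopMax.


Lemma rec_max fuel : forall H C X : {set T}, disj C H -> C :|: H != set0 ->
  (forall Tt, Tt \in Rec e rho fuel H C X -> good C H X Tt) /\ antichain (Rec e rho fuel H C X).
Proof.
elim: fuel => [|fuel IHf] H C X hd hn.
  by split => [Tt|S1 S2]; rewrite /= ?inE.
rewrite RecS; case: ifP => [_ | ncov].
  by split => [Tt|S1 S2]; rewrite ?inE.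
case: ifP => [dn | _].
  split; last by move=> S1 S2 /set1P -> /set1P -> /eqP.
  move=> Tt /set1P ->; split => //; first exact: subsetUl.
  move=> x xX; apply/negP => sub.
  have : covered e H X.
    apply/existsP; exists x; rewrite xX /=; apply/subsetP => h hH.
    by apply: (subsetP sub); rewrite !inE hH orbT andbT; apply/negP => /hd; rewrite hH.
  by rewrite ncov.
have [udeg mdeg] := degen_prop H.
apply: (@loop_max (Rec e rho fuel) (fun H' C' X' => @IHf H' C' X') H C X hd
   (degeneracy_ordering e H) set0 H X udeg) => //.
- by move=> x; rewrite mdeg.
- by move=> ?; rewrite inE.
- by move=> ? ?; rewrite inE.
- by move=> ?; rewrite inE.
Qed.

End Proofs.

Theorem theorem3p2 (T : finType) (e : rel T) (R : realFieldType) (rho : R) :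
  symmetric e -> irreflexive e -> (0 < #|T|)%N ->
  (0 < rho)%R -> (rho <= 1)%R ->
  dense_aggregator e rho (CliqueAgg e rho) /\
  inclusion_maximal (CliqueAgg e rho).
Proof.
move=> esym eirr T0 _ r1.
have hd : disj set0 [set: T] by move=> x; rewrite inE.
have hn : set0 :|: [set: T] != set0.
  by rewrite set0U; apply/set0Pn; case/card_gt0P: T0 => x _; exists x; rewrite inE.
have [gA aA] := @rec_max T e R rho esym eirr (#|T|.+1) [set: T] set0 set0 hd hn.
split; last exact: aA.
split.
- by move=> S /gA [].
- move=> K cK.
  have := @rec_cover T e R rho esym eirr r1 (#|T|.+1) [set: T] set0 set0 K _ _ cK (sub0set K) _.
  case.
  + by rewrite cardsT.
  + by move=> c h; rewrite inE.
  + by rewrite set0U subsetT.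
  + by move=> [S Sin KS]; exists S.
  + by move=> [x]; rewrite inE.
- by move=> S /gA [].
Qed.
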